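(* For $n\ge1$, $\lambda\in\mathbb J_n$ and $\mu\in\mathbb J_{n+1}$, $$1_{(\lambda\prec\mu)}=\det[\phi_n(\widetilde\lambda_i,\widetilde\mu_j)]_{i,j=1}^{r_{n+1}}\times\begin{cases}2^{-r_{n+1}},&n\text{ even},\\1,&n\text{ odd}.\end{cases}$$
   Context: $r_n=\lfloor(n+1)/2\rfloor$; $\mathbb J_n$ is the set of partitions $\lambda=(\lambda_1\ge\dots\ge\lambda_{r_n}\ge0)$ of integers, with the convention $\lambda_i=0$ for $i>r_n$. $\widetilde\lambda_i=\lambda_i+r_n-i$ for $\lambda\in\mathbb J_n$ (so if $n$ is even, $\widetilde\lambda_{r_{n+1}}=\widetilde\lambda_{r_n+1}=-1$), and $\widetilde\mu_j=\mu_j+r_{n+1}-j$ for $\mu\in\mathbb J_{n+1}$. $\lambda\prec\mu$ means $\mu_1\ge\lambda_1\ge\mu_2\ge\lambda_2\ge\dots\ge\mu_{r_n}\ge\lambda_{r_n}\ge\mu_{r_n+1}$. $\phi_n(s,t)=2\cdot1_{(s<t)}$ if $n$ even and $1_{(s\le t)}$ if $n$ odd. *)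

(* Defs.v *)
From mathcomp Require Import all_boot all_order all_algebra.
Set Implicit Arguments. Unset Strict Implicit. Unset Printing Implicit Defensive.
Import Order.TTheory GRing.Theory Num.Theory.
Local Open Scope ring_scope.

Definition rn (n : nat) : nat := (n.+1)./2.

(* A partition with r parts lambda_1 >= ... >= lambda_r >= 0, stored
   0-based as a function 'I_r -> nat. *)
Definition is_part (r : nat) (lam : 'I_r -> nat) : Prop :=
  forall i j : 'I_r, (i <= j)%N -> (lam j <= lam i)%N.

(* 1-based access with the convention lambda_i = 0 for i > r (and i = 0). *)
Definition pe (r : nat) (lam : 'I_r -> nat) (i : nat) : nat :=
  match i with
  | 0 => 0%N
  | k.+1 => if insub k is Some j then lam j else 0%N
  end.

Definition ptilde (r : nat) (lam : 'I_r -> nat) (i : nat) : int :=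
  (pe lam i)%:Z + r%:Z - i%:Z.

Definition interlace (n : nat) (lam : 'I_(rn n) -> nat)
    (mu : 'I_(rn n.+1) -> nat) : bool :=
  [forall i : 'I_(rn n),
     (pe lam i.+1 <= pe mu i.+1)%N && (pe mu i.+2 <= pe lam i.+1)%N].

Definition phi (n : nat) (s t : int) : rat :=
  if odd n then ((s <= t)%R : bool)%:R else 2 * (((s < t)%R : bool)%:R).

(* Main.v *)
Require Import Defs.
From mathcomp Require Import all_boot all_order all_algebra zify.
Import Order.TTheory GRing.Theory Num.Theory.
Local Open Scope ring_scope.

Lemma pe_out r (lam : 'I_r -> nat) i : (r < i)%N -> pe lam i = 0%N.
Proof.
case: i => [//|k] hk /=; rewrite insubN // -leqNgt -ltnS //.
Qed.

Lemma pe_mono r (lam : 'I_r -> nat) (h : is_part lam) i j :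
  (i <= j)%N -> (pe lam j.+1 <= pe lam i.+1)%N.
Proof.
move=> hij /=; case: insubP => [a ha ea|] ; case: insubP => [b hb eb|] //=.
- by apply: h; rewrite ea eb.
- by move=> /negP []; apply: leq_ltn_trans hij ha.
Qed.

Lemma rn_odd n : odd n -> rn n.+1 = rn n.
Proof. move=> h; rewrite /rn -uphalfE uphalf_half /= h //. Qed.

Lemma rn_even n : ~~ odd n -> rn n.+1 = (rn n).+1.
Proof. move=> h; rewrite /rn -uphalfE uphalf_half /= h //. Qed.
Fixpoint cond (x y : nat -> int) (m : nat) : bool :=
  match m with
  | 0 => true
  | m'.+1 => [&& cond x y m', x m' < y m' &
              (if m' is k.+1 then y m' <= x k else true)]
  end.

Lemma key (x y : nat -> int)
  (hx : forall i j, (i <= j)%N -> x j <= x i)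
  (hy : forall i j, (i <= j)%N -> y j <= y i) (m : nat) :
  \det (\matrix_(i < m, j < m) (((x i < y j)%R : bool)%:R : rat)) = (cond x y m)%:R.
Proof.
elim: m => [|m IH]; first by rewrite det_mx00.
rewrite (expand_det_col _ ord_max) /=.
have [hm|hm] := boolP (x m < y m); last first.
  rewrite big1 ?andbF //= => i _; rewrite mxE.
  have -> : (x i < y m) = false.
    apply/negbTE; rewrite -leNgt; apply: le_trans (hx _ _ (leq_ord i)).
    by rewrite leNgt.
  by rewrite mul0r.
case: m IH hm => [|k] IH hm.
  rewrite big_ord1 /= mxE hm /cofactor det_mx00 /=; by rewrite !mulr1.
have [hk|hk] := boolP (x k < y k.+1).
  rewrite -expand_det_col (@determinant_alternate _ _ _ (inord k) ord_max).
  - by rewrite /= leNgt hk !andbF.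
  - by rewrite neq_ltn /= inordK // ltnS leqnn.
  move=> j; rewrite !mxE inordK //=.
  have h1 : x k < y j by apply: lt_le_trans hk (hy _ _ _); rewrite -ltnS.
  have h2 : x k.+1 < y j by apply: le_lt_trans h1; apply: hx.
  by rewrite h1 h2.
rewrite (bigD1 ord_max) //= big1 ?addr0; last first.
  move=> i hi; rewrite mxE.
  have hi' : (i <= k)%N.
    have := ltn_ord i; rewrite ltnS leq_eqVlt => /orP [/eqP hik|] //.
    by case/eqP: hi; apply: val_inj.
  have -> : (x i < y k.+1) = false.
    apply/negbTE; rewrite -leNgt; apply: le_trans (hx _ _ hi').
    by rewrite leNgt.
  by rewrite mul0r.
rewrite mxE hm mul1r /cofactor /= addnn -muln2 mulnC exprM sqrrN !expr1n ?mul1r.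
rewrite -leNgt in hk; rewrite hk andbT -IH; congr (\det _).
by apply/matrixP => i j; rewrite !mxE !lift_max.
Qed.

Lemma condP x y m : cond x y m <->
  (forall i, (i < m)%N -> x i < y i) /\ (forall i, (i.+1 < m)%N -> y i.+1 <= x i).
Proof.
elim: m => [|m IH] /=; first by split => // _; split => i.
split.
- case/and3P => /IH [H1 H2] hm hk; split => i hi.
  + move: hi; rewrite ltnS leq_eqVlt => /orP [/eqP -> //|]; exact: H1.
  + move: hi; rewrite ltnS leq_eqVlt => /orP [/eqP hi|]; last exact: H2.
    by subst m.
- case=> H1 H2; apply/and3P; split.
  + apply/IH; split => i hi; [apply: H1 | apply: H2]; exact: ltnW.
  + exact: H1.
  + by case: m {IH H1 H2} (H2) => // k; apply.
Qed.

Lemma interlaceP n (lam : 'I_(rn n) -> nat) (mu : 'I_(rn n.+1) -> nat) :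
  interlace lam mu <-> forall i, (i < rn n)%N ->
    (pe lam i.+1 <= pe mu i.+1)%N /\ (pe mu i.+2 <= pe lam i.+1)%N.
Proof.
split.
- by move=> /forallP H i hi; have /andP [] := H (Ordinal hi).
- by move=> H; apply/forallP => i; apply/andP; apply: H.
Qed.

Lemma ptilde_mono r (lam : 'I_r -> nat) (h : is_part lam) i j :
  (i <= j)%N -> ptilde lam j.+1 <= ptilde lam i.+1.
Proof.
move=> hij; have := @pe_mono _ _ h _ _ hij; rewrite /ptilde; lia.
Qed.

Theorem lemma3p2 (n : nat) (hn : (1 <= n)%N)
    (lam : 'I_(rn n) -> nat) (mu : 'I_(rn n.+1) -> nat)
    (hlam : is_part lam) (hmu : is_part mu) :
  ((interlace lam mu)%:R : rat) =
    \det (\matrix_(i < rn n.+1, j < rn n.+1)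
            phi n (ptilde lam i.+1) (ptilde mu j.+1))
    * (if odd n then 1 else (2 ^- (rn n.+1) : rat)).
Proof.
have hx : forall i j, (i <= j)%N -> ptilde lam j.+1 <= ptilde lam i.+1.
  by move=> i j; apply: ptilde_mono.
have hy : forall i j, (i <= j)%N -> ptilde mu j.+1 <= ptilde mu i.+1.
  by move=> i j; apply: ptilde_mono.
have hlo : forall i, (rn n < i)%N -> pe lam i = 0%N by move=> i; apply: pe_out.
have hmo : forall i, (rn n.+1 < i)%N -> pe mu i = 0%N by move=> i; apply: pe_out.
case: (boolP (odd n)) => hodd.
- have hr := rn_odd _ hodd.
  set x := fun i => ptilde lam i.+1.
  set y := fun j => ptilde mu j.+1 + 1.
  have -> : \matrix_(i < rn n.+1, j < rn n.+1) phi n (ptilde lam i.+1) (ptilde mu j.+1)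
     = \matrix_(i < rn n.+1, j < rn n.+1) (((x i < y j)%R : bool)%:R : rat).
    by apply/matrixP => i j; rewrite !mxE /phi hodd /x /y ltzD1.
  rewrite key; last first.
    - by move=> i j hij; rewrite /y lerD2r; apply: hy.
    - exact: hx.
  rewrite mulr1; congr (_%:R); congr (nat_of_bool _).
  apply/idP/idP.
  + move/interlaceP => H; apply/condP; split => i hi.
    * have [] := H i ltac:(lia); rewrite /x /y /ptilde; lia.
    * have [] := H i ltac:(lia); rewrite /x /y /ptilde; lia.
  + case/condP => H1 H2; apply/interlaceP => i hi.
    have h1 := H1 i ltac:(lia); move: h1; rewrite /x /y /ptilde => h1.
    split; first lia.
    case: (ltnP i.+1 (rn n)) => hi2.
    * have := H2 i ltac:(lia); rewrite /x /y /ptilde; lia.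
    * rewrite hmo; first lia. rewrite hr; lia.
- have hr := rn_even _ hodd.
  set x := fun i => ptilde lam i.+1.
  set y := fun j => ptilde mu j.+1.
  have -> : \matrix_(i < rn n.+1, j < rn n.+1) phi n (ptilde lam i.+1) (ptilde mu j.+1)
     = 2 *: \matrix_(i < rn n.+1, j < rn n.+1) (((x i < y j)%R : bool)%:R : rat).
    by apply/matrixP => i j; rewrite !mxE /phi (negbTE hodd).
  rewrite detZ key //.
  rewrite mulrC mulrA mulVf ?mul1r; last by rewrite expf_neq0.
  congr (_%:R); congr (nat_of_bool _).
  apply/idP/idP.
  + move/interlaceP => H; apply/condP; split => i hi.
    * case: (ltnP i (rn n)) => hi2.
      - have [] := H i hi2; rewrite /x /y /ptilde; lia.
      - rewrite /x /y /ptilde hlo; last lia. lia.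
    * have [] := H i ltac:(lia); rewrite /x /y /ptilde; lia.
  + case/condP => H1 H2; apply/interlaceP => i hi.
    have h1 := H1 i ltac:(lia); move: h1; rewrite /x /y /ptilde => h1.
    have h2 := H2 i ltac:(lia); move: h2; rewrite /x /y /ptilde => h2.
    split; lia.
Qed.
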